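(* Let $D\subset\mathbb N^n$ be finite, not contained in any coordinate hyperplane, $p$ a prime, $k\ge1$, and let $\mathbf e_{-1},\mathbf e_0,\dots,\mathbf e_{k-1}\in\Sigma_p(D)$ (not necessarily distinct) with $V(\mathbf e_i,\mathbf e_{i-1})\ne\emptyset$ for $0\le i\le k-1$. For every $(V_i)_{0\le i\le k-1}\in\prod_{i=0}^{k-1}V(\mathbf e_i,\mathbf e_{i-1})$, $V_i=(v_{i\mathbf d})_{\mathbf d}$, there is a minimal $U=(u_{\mathbf d})\in E_{D,p}(r)$ for some $r\ge k$ such that for each $\mathbf d$ the remainder of $u_{\mathbf d}$ modulo $p^k$ is $\sum_{i=0}^{k-1}p^iv_{i\mathbf d}$, and $\varphi_U(i)=\mathbf e_{r-1-i}$ for all $r-k\le i\le r$.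
   Context: $s_p$ = base-$p$ digit sum. $E_{D,p}(r)$ = set of $U=(u_{\mathbf d})\in\{0,\dots,p^r-1\}^D$ with $\sum u_{\mathbf d}\mathbf d\equiv0\pmod{p^r-1}$ and all coordinates of $\sum u_{\mathbf d}\mathbf d$ positive; $s_p(U)=\sum s_p(u_{\mathbf d})$; $\delta_p(D)=\frac1{p-1}\min_{r\ge1}\min_{U\in E_{D,p}(r)}s_p(U)/r$; minimal means $s_p(U)=(p-1)r\delta_p(D)$. Shift $\delta_r$: $k\mapsto pk\bmod(p^r-1)$ for $k\le p^r-2$, $p^r-1\mapsto p^r-1$, coordinatewise. $\varphi_U(j)=\frac1{p^r-1}\sum\mathbf d(\delta_r^jU)_{\mathbf d}$ for $j\in\mathbb Z/r\mathbb Z$ (indices mod $r$); irreducible means $\varphi_U$ injective; $MI_{D,p}$ = minimal irreducible elements of all lengths; $\Sigma_p(D)=\bigcup_{U\in MI_{D,p}}\mathrm{Im}\varphi_U$. $\psi(U)=(u_{\mathbf d}\bmod p)_{\mathbf d}$; $V(\mathbf e,\mathbf e')=\{\psi(U):U\in MI_{D,p},\varphi_U(-1)=\mathbf e,\varphi_U(0)=\mathbf e'\}$. *)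

(* Defs.v *)
From HB Require Import structures.
From mathcomp Require Import all_boot all_order all_algebra.
From mathcomp Require Import finmap.
Set Implicit Arguments. Unset Strict Implicit. Unset Printing Implicit Defensive.
Import Order.TTheory GRing.Theory Num.Theory.
Local Open Scope fset_scope.

Section Defs.
Variables (n p : nat) (D : {fset n.-tuple nat}).

Definition fam := {ffun D -> nat}.

Definition sp (m : nat) : nat := \sum_(i < m.+1) ((m %/ p ^ i) %% p).

Definition vsum (U : fam) : n.-tuple nat :=
  [tuple \sum_(d : D) U d * tnth (val d) j | j < n].

Definition inE (r : nat) (U : fam) : Prop :=
  0 < r /\ (forall d : D, U d < p ^ r) /\
  (forall j : 'I_n, tnth (vsum U) j %% (p ^ r - 1) = 0 /\ 0 < tnth (vsum U) j).

Definition spU (U : fam) : nat := \sum_(d : D) sp (U d).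

(* minimal: s_p(U)/r attains the minimum of s_p(U')/r' over all r' >= 1, U' in E(r'),
   i.e. s_p(U) = (p-1) r delta_p(D). *)
Definition minimal (r : nat) (U : fam) : Prop :=
  inE r U /\ forall (r' : nat) (U' : fam), inE r' U' -> spU U * r' <= spU U' * r.

Definition shift (r k : nat) : nat :=
  if k <= p ^ r - 2 then (p * k) %% (p ^ r - 1) else p ^ r - 1.

Definition shiftU (r : nat) (U : fam) : fam := [ffun d => shift r (U d)].

(* phi_U(j), j taken modulo r (so phi_U(-1) = phi r U (r-1)) *)
Definition phi (r : nat) (U : fam) (j : nat) : n.-tuple nat :=
  [tuple tnth (vsum (iter (j %% r) (shiftU r) U)) i %/ (p ^ r - 1) | i < n].

Definition irreducible (r : nat) (U : fam) : Prop :=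
  forall i j, i < r -> j < r -> phi r U i = phi r U j -> i = j.

Definition inMI (r : nat) (U : fam) : Prop := minimal r U /\ irreducible r U.

Definition Sigma (e : n.-tuple nat) : Prop :=
  exists (r : nat) (U : fam) (j : nat), inMI r U /\ j < r /\ phi r U j = e.

Definition psi (U : fam) : fam := [ffun d => U d %% p].

Definition Vset (e e' : n.-tuple nat) (v : fam) : Prop :=
  exists (r : nat) (U : fam), inMI r U /\ phi r U (r - 1) = e /\ phi r U 0 = e' /\ v = psi U.

End Defs.

Arguments vsum {n} D U.
Arguments inE {n} p D r U.
Arguments spU {n} p D U.
Arguments minimal {n} p D r U.
Arguments shiftU {n} p D r U.
Arguments phi {n} p D r U j.
Arguments irreducible {n} p D r U.
Arguments inMI {n} p D r U.
Arguments Sigma {n} p D e.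
Arguments psi {n} p D U.
Arguments Vset {n} p D e e' v.

(* Main.v *)
Require Import Defs.
From HB Require Import structures.
From mathcomp Require Import all_boot all_order all_algebra.
From mathcomp Require Import finmap zify.
Import Order.TTheory GRing.Theory Num.Theory.
Local Open Scope fset_scope.
Local Open Scope nat_scope.

Lemma dm H L M : L < M -> (H * M + L) %/ M = H /\ (H * M + L) %% M = L.
Proof.
move=> LM; have M0 : 0 < M by apply: leq_ltn_trans LM.
by rewrite divnMDl // divn_small // addn0 modnMDl modn_small.
Qed.

Lemma shift_rot p r u : 1 < p -> 0 < r -> u < p ^ r ->
  shift p r u = (u %% p ^ (r - 1)) * p + u %/ p ^ (r - 1).
Proof.
move=> p1 r0 ur.
have er : p ^ r = p * p ^ (r - 1) by rewrite -expnS; congr (_ ^ _); lia.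
move: ur; rewrite er; set P := p ^ (r - 1) => ur.
have P0 : 0 < P by rewrite expn_gt0; lia.
have ue := divn_eq u P.
have bP : u %% P < P by rewrite ltn_pmod.
have ap : u %/ P < p by rewrite ltn_divLR // mulnC.
set a := u %/ P in ue ap *; set b := u %% P in ue bP *.
rewrite /shift er.
case: ifP => hu.
- have -> : p * u = a * (p * P - 1) + (b * p + a).
    rewrite {1}ue mulnDr mulnBr muln1.
    have : a <= a * (p * P) by rewrite leq_pmulr // muln_gt0; lia.
    nia.
  rewrite modnMDl modn_small //.
  nia.
- have hu' : u = p * P - 1 by lia.
  have : a = p - 1 /\ b = P - 1.
    have e1 : (p - 1) * P + (P - 1) = u by nia.
    have [h1 h2] := @dm (p - 1) (P - 1) P ltac:(lia).
    by rewrite e1 in h1 h2.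
  case=> -> ->; nia.
Qed.

Lemma iter_shift p r j u : 1 < p -> 0 < r -> u < p ^ r -> j <= r ->
  iter j (shift p r) u = (u %% p ^ (r - j)) * p ^ j + u %/ p ^ (r - j).
Proof.
move=> p1 r0 ur; elim: j => [|j IH] jr.
  rewrite subn0 expn0 muln1 modn_small // divn_small // addn0 //=.
rewrite iterS IH; last lia.
have p0 : 0 < p by lia.
set s := r - j.+1.
have e1 : r - j = s.+1 by lia.
have e2 : r - 1 = s + j by lia.
have er : p ^ r = p ^ s.+1 * p ^ j by rewrite -expnD; congr (_ ^ _); lia.
rewrite e1.
have ps : 0 < p ^ s by rewrite expn_gt0 p0.
have pj : 0 < p ^ j by rewrite expn_gt0 p0.
set a := u %/ p ^ s.+1.
set c := (u %/ p ^ s) %% p.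
set e := u %% p ^ s.
have ha : a < p ^ j by rewrite ltn_divLR ?expn_gt0 ?p0 // mulnC -er.
have hc : c < p by rewrite ltn_pmod.
have he : e < p ^ s by rewrite ltn_pmod.
have hus : u %/ p ^ s = a * p + c.
  by rewrite /a expnSr divnMA /c; apply: divn_eq.
have hu1 : u %% p ^ s.+1 = c * p ^ s + e.
  have : u = a * p ^ s.+1 + (c * p ^ s + e).
    rewrite {1}(divn_eq u (p ^ s)) hus /e expnSr mulnDl addnA mulnAC; lia.
  move=> ->; rewrite modnMDl modn_small // expnS.
  have : c * p ^ s + e < c.+1 * p ^ s by rewrite mulSn; lia.
  move/leq_trans; apply; rewrite leq_mul2r; lia.
rewrite hu1.
have hlt : e * p ^ j + a < p ^ (s + j).
  rewrite expnD; have : e * p ^ j + a < e.+1 * p ^ j by rewrite mulSn; lia.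
  move/leq_trans; apply; rewrite leq_mul2r; lia.
have hX : (c * p ^ s + e) * p ^ j + a = c * p ^ (s + j) + (e * p ^ j + a).
  by rewrite expnD mulnDl mulnA addnA.
rewrite shift_rot //; last first.
  rewrite hX er expnS -mulnA -expnD.
  have : c * p ^ (s + j) + (e * p ^ j + a) < c.+1 * p ^ (s + j) by rewrite mulSn; lia.
  move/leq_trans; apply; rewrite leq_mul2r; lia.
rewrite e2 hX.
have [h1 h2] := @dm c _ _ hlt.
rewrite h1 h2 expnS hus; lia.
Qed.

Definition fv {n} {D : {fset n.-tuple nat}} (N : fam D) (c : 'I_n) : nat :=
  tnth (vsum D N) c.

Lemma fvE n (D : {fset n.-tuple nat}) (N : fam D) c :
  fv N c = \sum_(d : D) N d * tnth (val d) c.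
Proof. by rewrite /fv /vsum tnth_mktuple. Qed.

Lemma fv_lin n (D : {fset n.-tuple nat}) (A B : fam D) M c :
  fv [ffun d => A d * M + B d] c = fv A c * M + fv B c.
Proof.
rewrite !fvE big_distrl -big_split /=; apply: eq_bigr => d _.
by rewrite ffunE mulnDl mulnAC.
Qed.

Definition step p {n} {D : {fset n.-tuple nat}} (x : n.-tuple nat) (m : nat)
  (N : fam D) (y : n.-tuple nat) : Prop :=
  forall c, p ^ m * tnth x c = tnth y c + fv N c.

Lemma step_cat p n (D : {fset n.-tuple nat}) x m1 (N1 : fam D) y m2 (N2 : fam D) z :
  step p x m1 N1 y -> step p y m2 N2 z ->
  step p x (m1 + m2) [ffun d => N1 d * p ^ m2 + N2 d] z.
Proof.
move=> h1 h2 c; rewrite fv_lin expnD mulnAC h1 mulnDl (mulnC (tnth y c)) h2.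
lia.
Qed.

Lemma iter_shiftU p n (D : {fset n.-tuple nat}) r j (U : fam D) :
  iter j (shiftU p D r) U = [ffun d => iter j (shift p r) (U d)].
Proof.
elim: j => [|j IH] /=; first by apply/ffunP => d; rewrite ffunE.
by rewrite IH; apply/ffunP => d; rewrite !ffunE.
Qed.

Lemma phi_step p n (D : {fset n.-tuple nat}) r j (U : fam D) x y :
  1 < p -> 0 < r -> (forall d, U d < p ^ r) -> j < r ->
  step p x j [ffun d => U d %/ p ^ (r - j)] y ->
  step p y (r - j) [ffun d => U d %% p ^ (r - j)] x ->
  phi p D r U j = y.
Proof.
move=> p1 r0 Ur jr h1 h2.
apply: eq_from_tnth => c; rewrite /phi tnth_mktuple modn_small //.
rewrite iter_shiftU.
have -> : [ffun d => iter j (shift p r) (U d)] =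
   [ffun d => [ffun d => U d %% p ^ (r - j)] d * p ^ j + [ffun d => U d %/ p ^ (r - j)] d].
  by apply/ffunP => d; rewrite !ffunE iter_shift // ltnW.
rewrite -/(fv _ c) fv_lin.
have er : p ^ r = p ^ j * p ^ (r - j) by rewrite -expnD; congr (_ ^ _); lia.
have Q0 : 0 < p ^ r - 1.
  have : 1 < p ^ r by rewrite -(exp1n r) ltn_exp2r.
  lia.
have := h1 c; have := h2 c.
set A := p ^ j; set B := p ^ (r - j); set L := fv _ c; set H := fv _ c.
move=> e2 e1.
have -> : L * A + H = (p ^ r - 1) * tnth y c.
  rewrite mulnBl mul1n er -mulnA e2 mulnDr e1; lia.
by rewrite mulKn.
Qed.

Lemma Q_pos p r : 1 < p -> 0 < r -> 0 < p ^ r - 1.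
Proof. move=> p1 r0; have : 1 < p ^ r by rewrite -(exp1n r) ltn_exp2r. lia. Qed.

Lemma phi0E p n (D : {fset n.-tuple nat}) r (U : fam D) c :
  0 < r -> tnth (phi p D r U 0) c = fv U c %/ (p ^ r - 1).
Proof. by move=> r0; rewrite /phi tnth_mktuple mod0n. Qed.

Lemma closed_step p n (D : {fset n.-tuple nat}) r (U : fam D) :
  1 < p -> Defs.inE p D r U ->
  step p (phi p D r U 0) r U (phi p D r U 0) /\
  (forall c, 0 < tnth (phi p D r U 0) c).
Proof.
move=> p1 [r0 [Ur Hv]].
have Q0 := @Q_pos p r p1 r0.
have key c : fv U c = tnth (phi p D r U 0) c * (p ^ r - 1).
  by rewrite phi0E // {1}(divn_eq (fv U c) (p ^ r - 1)) -/(fv U c) (proj1 (Hv c)) addn0.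
split=> c.
  have : 1 <= p ^ r by rewrite expn_gt0; lia.
  by move=> h; rewrite key mulnBr muln1 subnKC ?(mulnC (p ^ r)) // leq_pmulr.
have := proj2 (Hv c); rewrite -/(fv U c) key; case: (tnth _ c) => //.
Qed.

Lemma coprimeQ p r : 1 < p -> 0 < r -> coprime (p ^ r - 1) p.
Proof.
move=> p1 r0.
have h : coprime (p ^ r - 1) (p ^ r - 1).+1 := coprimenS _.
have e : (p ^ r - 1).+1 = p ^ r by have := @Q_pos p r p1 r0; lia.
rewrite e in h; apply: coprime_dvdr h.
by rewrite -(subnK r0) expnD expn1 dvdn_mull.
Qed.

Lemma W_split p n (D : {fset n.-tuple nat}) r (W : fam D) :
  prime p -> Defs.inE p D r W ->
  step p (phi p D r W 0) (r - 1) [ffun d => W d %/ p] (phi p D r W (r - 1)) /\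
  step p (phi p D r W (r - 1)) 1 [ffun d => W d %% p] (phi p D r W 0).
Proof.
move=> pp hW; have p1 := prime_gt1 pp; have p0 := prime_gt0 pp.
have [cs _] := @closed_step p n D r W p1 hW.
have r0 : 0 < r by case: hW.
have Ur : forall d, W d < p ^ r by case: hW => _ [].
have Q0 := @Q_pos p r p1 r0.
have cQ := @coprimeQ p r p1 r0.
have er : p ^ r = p * p ^ (r - 1) by rewrite -expnS; congr (_ ^ _); lia.
set x := phi p D r W 0; set y := phi p D r W (r - 1).
have hW2 : W = [ffun d => [ffun d => W d %/ p] d * p + [ffun d => W d %% p] d].
  by apply/ffunP => d; rewrite !ffunE -divn_eq.
have main c : p * tnth y c = tnth x c + fv [ffun d => W d %% p] c /\
     p ^ (r - 1) * tnth x c = tnth y c + fv [ffun d => W d %/ p] c.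
  set A := fv [ffun d => W d %/ p] c; set B := fv [ffun d => W d %% p] c.
  have hc : p ^ r * tnth x c = tnth x c + (A * p + B).
    by rewrite (cs c) /A /B -fv_lin -hW2.
  have hF : tnth y c = (B * p ^ (r - 1) + A) %/ (p ^ r - 1).
    rewrite /y /phi tnth_mktuple (modn_small (m:=r - 1)); last lia.
    rewrite iter_shiftU.
    have -> : [ffun d => iter (r - 1) (shift p r) (W d)] =
      [ffun d => [ffun d => W d %% p] d * p ^ (r - 1) + [ffun d => W d %/ p] d].
      apply/ffunP => d; rewrite !ffunE iter_shift ?leq_subr //.
      by have -> : r - (r - 1) = 1 by lia.
    by rewrite -/(fv _ c) fv_lin.
  set F := B * p ^ (r - 1) + A in hF.
  have pF : F * p = (B + tnth x c) * (p ^ r - 1).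
    rewrite /F mulnDl -mulnA (mulnC _ p) -er.
    have : p ^ r * tnth x c = tnth x c + (A * p + B) by [].
    rewrite mulnDl !mulnBr !muln1.
    have : 1 <= p ^ r by rewrite expn_gt0; lia.
    nia.
  have dF : (p ^ r - 1) %| F.
    by rewrite -(Gauss_dvdl _ cQ) pF dvdn_mull.
  have Fy : F = tnth y c * (p ^ r - 1) by rewrite hF divnK.
  have py : p * tnth y c = B + tnth x c.
    by apply/eqP; rewrite -(eqn_pmul2r Q0) -mulnA -Fy mulnC pF.
  split; first by rewrite py addnC.
  apply/eqP; rewrite -(eqn_pmul2l p0) mulnA -expnS.
  have -> : (r - 1).+1 = r by lia.
  by rewrite hc mulnDr py; apply/eqP; lia.
by split=> c; have [h1 h2] := main c; rewrite ?expn1.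
Qed.

Lemma dig_ext p m N M : 1 < p -> m < p ^ N -> N <= M ->
  \sum_(i < M) (m %/ p ^ i) %% p = \sum_(i < N) (m %/ p ^ i) %% p.
Proof.
move=> p1 mN NM.
rewrite -!(big_mkord xpredT (fun i => (m %/ p ^ i) %% p)).
rewrite (big_cat_nat (n:=N)) //=.
rewrite [X in _ + X]big_nat_cond [X in _ + X]big1 ?addn0 // => i.
rewrite andbT => /andP [Ni _]; rewrite divn_small ?mod0n //.
apply: leq_trans mN _; rewrite leq_exp2l //.
Qed.

Lemma sp_ext p m N : 1 < p -> m < p ^ N -> sp p m = \sum_(i < N) (m %/ p ^ i) %% p.
Proof.
move=> p1 mN; rewrite /sp.
have m1 : m < p ^ m.+1 by apply: leq_trans (ltn_expl m p1) _; rewrite leq_exp2l.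
case: (leqP N m.+1) => h.
  by rewrite (@dig_ext p m N m.+1 p1 mN h).
by rewrite (@dig_ext p m m.+1 N p1 m1 (ltnW h)).
Qed.

Lemma sp_step p a b : 1 < p -> b < p -> sp p (a * p + b) = sp p a + b.
Proof.
move=> p1 bp; set m := a * p + b.
have hm : m < p ^ m.+1 by apply: leq_trans (ltn_expl m p1) _; rewrite leq_exp2l.
have ha : a < p ^ m.
  apply: leq_ltn_trans (ltn_expl m p1); rewrite /m.
  by apply: leq_trans (leq_addr _ _); rewrite leq_pmulr //; lia.
rewrite (@sp_ext p _ _ p1 hm) (@sp_ext p _ _ p1 ha) big_ord_recl /= expn0 divn1.
have h0 : m %% p = b by rewrite /m modnMDl modn_small.
have hi i : (m %/ p ^ i.+1) %% p = (a %/ p ^ i) %% p.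
  by rewrite /m expnS divnMA divnMDl ?(divn_small bp) ?addn0 //; lia.
rewrite h0 addnC; congr (_ + _); apply: eq_bigr => i _.
by rewrite /bump /= add1n hi.
Qed.

Lemma sp0 p : sp p 0 = 0.
Proof. by rewrite /sp big_ord_recl big_ord0 div0n mod0n. Qed.

Lemma sp_small p v : 1 < p -> v < p -> sp p v = v.
Proof. by move=> p1 vp; have := @sp_step p 0 v p1 vp; rewrite mul0n add0n sp0. Qed.

Lemma sp_cat p a m b : 1 < p -> b < p ^ m -> sp p (a * p ^ m + b) = sp p a + sp p b.
Proof.
move=> p1; elim: m b => [|m IH] b.
  by rewrite expn0 ltnS leqn0 => /eqP ->; rewrite muln1 addn0 sp0 addn0.
move=> bm.
have p0 : 0 < p by lia.
have hb := divn_eq b p.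
have b1 : b %/ p < p ^ m by rewrite ltn_divLR // -expnSr.
have b0 : b %% p < p by rewrite ltn_pmod.
have -> : a * p ^ m.+1 + b = (a * p ^ m + b %/ p) * p + b %% p.
  by rewrite {1}hb expnSr mulnDl mulnA addnA.
have -> : sp p b = sp p (b %/ p) + b %% p by rewrite {1}hb sp_step.
by rewrite sp_step // IH // addnA.
Qed.

Lemma fv0 n (D : {fset n.-tuple nat}) c : fv ([ffun d => 0] : fam D) c = 0.
Proof. by rewrite fvE big1 // => d _; rewrite ffunE. Qed.

Definition Qf p {n} {D : {fset n.-tuple nat}} (V : nat -> fam D) (a m : nat) : fam D :=
  [ffun d => \sum_(i < m) p ^ i * V (a + i) d].

Lemma Qf_split p n (D : {fset n.-tuple nat}) (V : nat -> fam D) a m1 m2 d :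
  Qf p V a (m1 + m2) d = Qf p V (a + m1) m2 d * p ^ m1 + Qf p V a m1 d.
Proof.
rewrite !ffunE big_split_ord /= addnC; congr (_ + _).
rewrite big_distrl /=; apply: eq_bigr => i _.
by rewrite expnD addnA; lia.
Qed.

Lemma Qf_prop p n (D : {fset n.-tuple nat}) (V : nat -> fam D) (E : nat -> n.-tuple nat) k :
  1 < p ->
  (forall i, i < k -> step p (E i.+1) 1 (V i) (E i)) ->
  (forall i, i < k -> forall d, V i d < p) ->
  forall a m, a + m <= k ->
  [/\ step p (E (a + m)) m (Qf p V a m) (E a),
      (forall d, Qf p V a m d < p ^ m) &
      (forall d, sp p (Qf p V a m d) = \sum_(i < m) V (a + i) d)].
Proof.
move=> p1 hs hv a; elim=> [|m IH] am.
  split.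
  - move=> c; rewrite expn0 mul1n addn0.
    have -> : Qf p V a 0 = [ffun d => 0] by apply/ffunP => d; rewrite !ffunE big_ord0.
    by rewrite fv0 addn0.
  - by move=> d; rewrite ffunE big_ord0.
  - by move=> d; rewrite ffunE big_ord0 big_ord0 sp0.
have [s1 s2 s3] := IH ltac:(lia).
have eQ : Qf p V a m.+1 = [ffun d => V (a + m) d * p ^ m + Qf p V a m d].
  by apply/ffunP => d; rewrite [RHS]ffunE -addn1 Qf_split {1}/Qf ffunE big_ord1 addn0 expn0 mul1n.
have am' : a + m < k by lia.
split.
- rewrite eQ addnS; have := @step_cat p n D _ _ _ _ _ _ _ (hs _ am') s1.
  by rewrite add1n.
- move=> d; rewrite eQ ffunE expnS.
  have : V (a + m) d * p ^ m + Qf p V a m d < (V (a + m) d).+1 * p ^ m.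
    by rewrite mulSn addnC ltn_add2r s2.
  move/leq_trans; apply; rewrite leq_mul2r; have := hv _ am' d; lia.
- move=> d; rewrite eQ ffunE sp_cat // sp_small ?hv // s3 big_ord_recr /= addnC.
  by [].
Qed.

Lemma top_prop p n (D : {fset n.-tuple nat}) (V : nat -> fam D) (E : nat -> n.-tuple nat) k :
  prime p ->
  (forall i, i < k -> exists r (W : fam D), minimal p D r W /\
     step p (E i) (r - 1) [ffun d => W d %/ p] (E i.+1) /\
     V i = [ffun d => W d %% p] /\ 0 < r /\ (forall d, W d < p ^ r)) ->
  forall m, m <= k -> exists R (P : fam D), (forall d, P d < p ^ R) /\
     step p (E 0) R P (E m) /\
     forall r' (U' : fam D), Defs.inE p D r' U' ->
       (spU p D P + \sum_(d : D) \sum_(i < m) V i d) * r' <= spU p D U' * (R + m).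
Proof.
move=> pp hW; have p1 := prime_gt1 pp; have p0 := prime_gt0 pp.
elim=> [|m IH] mk.
  exists 0, [ffun d => 0]; split; first by move=> d; rewrite ffunE.
  split.
    by move=> c; rewrite expn0 mul1n fv0 addn0.
  move=> r' U' _.
  have -> : spU p D [ffun d => 0] = 0 by rewrite /spU big1 // => d _; rewrite ffunE sp0.
  have -> : \sum_(d : D) \sum_(i < 0) V i d = 0 by rewrite big1 // => d _; rewrite big_ord0.
  done.
have [R [P [hP [hs hi]]]] := IH (ltnW mk).
have [r [W [[hin hmin] [hsW [hVm [r0 hWr]]]]]] := hW m mk.
exists (R + (r - 1)), [ffun d => P d * p ^ (r - 1) + W d %/ p].
have er : p ^ r = p ^ (r - 1) * p by rewrite -expnSr; congr (_ ^ _); lia.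
have hw d : W d %/ p < p ^ (r - 1) by rewrite ltn_divLR // -er.
split.
  move=> d; rewrite ffunE expnD.
  have : P d * p ^ (r - 1) + W d %/ p < (P d).+1 * p ^ (r - 1).
    by rewrite mulSn addnC ltn_add2r.
  by move/leq_trans; apply; rewrite leq_mul2r hP orbT.
split.
  have := @step_cat p n D _ _ _ _ _ _ _ hs hsW.
  have -> : [ffun d => P d * p ^ (r - 1) + [ffun d => W d %/ p] d] =
    [ffun d => P d * p ^ (r - 1) + W d %/ p] by apply/ffunP => d; rewrite !ffunE.
  done.
move=> r' U' hU'.
have h1 := hi r' U' hU'.
have h2 := hmin r' U' hU'.
have eS : spU p D [ffun d => P d * p ^ (r - 1) + W d %/ p] +
     \sum_(d : D) \sum_(i < m.+1) V i d =
     (spU p D P + \sum_(d : D) \sum_(i < m) V i d) + spU p D W.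
  rewrite /spU.
  under eq_bigr => d _ do rewrite ffunE sp_cat ?hw //.
  under [\sum_(d : D) \sum_(i < m.+1) V i d]eq_bigr do rewrite big_ord_recr /=.
  under [\sum_(d : D) sp p (W d)]eq_bigr => d _ do rewrite (divn_eq (W d) p) sp_step ?ltn_pmod //.
  rewrite !big_split /=.
  have -> : \sum_(d : D) V m d = \sum_(d : D) W d %% p.
    by apply: eq_bigr => d _; rewrite hVm ffunE.
  by rewrite addnACA.
rewrite eS mulnDl.
have -> : R + (r - 1) + m.+1 = (R + m) + r by lia.
by rewrite mulnDr leq_add.
Qed.

Theorem lemma2p16 (n : nat) (D : {fset n.-tuple nat}) (p k : nat)
  (e : int -> n.-tuple nat) :
  (forall j : 'I_n, exists2 d, d \in D & tnth d j != 0%N) ->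
  prime p -> (1 <= k)%N ->
  (forall i : int, (-1 <= i)%R -> (i <= (Posz k - 1))%R -> Sigma p D (e i)) ->
  (forall i : nat, (i < k)%N -> exists v, Vset p D (e (Posz i)) (e (Posz i - 1)%R) v) ->
  forall V : nat -> fam D,
  (forall i : nat, (i < k)%N -> Vset p D (e (Posz i)) (e (Posz i - 1)%R) (V i)) ->
  exists (r : nat) (U : fam D),
    (k <= r)%N /\ minimal p D r U /\
    (forall d : D, U d %% p ^ k = \sum_(i < k) p ^ i * V i d)%N /\
    (forall i : nat, (r - k <= i)%N -> (i <= r)%N ->
       phi p D r U i = e (Posz r - 1 - Posz i)%R).
Proof.
move=> _ pp k1 _ _ V hV.
have p1 := prime_gt1 pp; have p0 := prime_gt0 pp.
pose E := fun m : nat => e (Posz m - 1)%R.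
have EE i : e (Posz i) = E i.+1 by rewrite /E -addn1 PoszD addrK.
have hV' i : i < k -> exists r (W : fam D), minimal p D r W /\
     step p (E i) (r - 1) [ffun d => W d %/ p] (E i.+1) /\
     V i = [ffun d => W d %% p] /\ 0 < r /\ (forall d, W d < p ^ r) /\
     step p (E i.+1) 1 (V i) (E i) /\ (forall c, 0 < tnth (E i) c).
  move=> ik; have [r [W [[hmin _] [h1 [h2 h3]]]]] := hV i ik.
  have hin := proj1 hmin.
  have [s1 s2] := @W_split p n D r W pp hin.
  have [_ pos] := @closed_step p n D r W p1 hin.
  rewrite h1 EE h2 in s1 s2; rewrite h2 in pos.
  exists r, W; split=> //; split=> //; split=> //.
  split; first by case: hin.
  split; first by case: hin => _ [].
  by rewrite h3.
have [R [P [hP [hs hi]]]] := @top_prop p n D V E k pp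
   (fun i ik => let: ex_intro r (ex_intro W (conj a (conj b (conj c (conj d (conj f _)))))) :=
       hV' i ik in ex_intro _ r (ex_intro _ W (conj a (conj b (conj c (conj d f)))))) k (leqnn k).
have hsV i : i < k -> step p (E i.+1) 1 (V i) (E i).
  by move=> ik; have [r [W [_ [_ [_ [_ [_ [h _]]]]]]]] := hV' i ik.
have hvp i : i < k -> forall d, V i d < p.
  move=> ik d; have [r [W [_ [_ [h _]]]]] := hV' i ik.
  by rewrite h ffunE ltn_pmod.
have pos : forall c, 0 < tnth (E 0) c.
  by have [r [W [_ [_ [_ [_ [_ [_ h]]]]]]]] := hV' 0 k1.
have QP a m := @Qf_prop p n D V E k p1 hsV hvp a m.
have [q1 q2 q3] := QP 0 k (leqnn k).
rewrite add0n in q1.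
pose U : fam D := [ffun d => P d * p ^ k + Qf p V 0 k d].
have hU : step p (E 0) (R + k) U (E 0) by apply: step_cat hs q1.
have Ur d : U d < p ^ (R + k).
  rewrite ffunE expnD.
  have : P d * p ^ k + Qf p V 0 k d < (P d).+1 * p ^ k.
    by rewrite mulSn addnC ltn_add2r.
  by move/leq_trans; apply; rewrite leq_mul2r hP orbT.
have r0 : 0 < R + k by lia.
have Q0 := @Q_pos p (R + k) p1 r0.
have fvU c : fv U c = tnth (E 0) c * (p ^ (R + k) - 1).
  have h := hU c; rewrite mulnBr muln1 mulnC h; lia.
have hinU : Defs.inE p D (R + k) U.
  split=> //; split=> // c; rewrite -/(fv U c) fvU modnMl; split=> //.
  by rewrite muln_gt0 pos.
have spUU : spU p D U = spU p D P + \sum_(d : D) \sum_(i < k) V i d.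
  rewrite /spU -big_split /=; apply: eq_bigr => d _.
  by rewrite ffunE sp_cat // q3.
exists (R + k), U; split; first exact: leq_addl.
split.
  split=> // r' U' hU'; rewrite spUU; exact: hi.
split.
  move=> d; rewrite ffunE modnMDl modn_small // ffunE.
  by apply: eq_bigr => i _; rewrite add0n.
move=> i hi1 hi2.
have -> : (Posz (R + k) - 1 - Posz i)%R = (Posz (R + k - i) - 1)%R.
  by rewrite -subzn // addrAC.
rewrite -/(E (R + k - i)).
case: (ltngtP i (R + k)) => [ilt | igt | ieq]; last first.
- rewrite ieq subnn.
  have -> : phi p D (R + k) U (R + k) = phi p D (R + k) U 0 by rewrite /phi modnn mod0n.
  apply: (@phi_step p n D (R + k) 0 U (E 0) (E 0) p1 r0 Ur r0).
    move=> c; rewrite expn0 mul1n subn0.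
    have -> : [ffun d => U d %/ p ^ (R + k)] = [ffun d => 0].
      by apply/ffunP => d; rewrite [LHS]ffunE (divn_small (Ur d)) ffunE.
    by rewrite fv0 addn0.
  rewrite subn0; have -> : [ffun d => U d %% p ^ (R + k)] = U.
    by apply/ffunP => d; rewrite ffunE (modn_small (Ur d)).
  exact: hU.
- by move: hi2; rewrite leqNgt igt.
set t := i - R.
have ei : i = R + t by rewrite /t; lia.
have tk : t < k by lia.
have e1 : R + k - i = k - t by lia.
rewrite e1 ei.
have [a1 a2 a3] := QP (k - t) t ltac:(lia).
have [b1 b2 b3] := QP 0 (k - t) ltac:(lia).
rewrite subnK in a1; last lia.
rewrite add0n in b1.
have hsplit d : U d = (P d * p ^ t + Qf p V (k - t) t d) * p ^ (k - t) + Qf p V 0 (k - t) d.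
  have ek : Qf p V 0 k d = Qf p V (k - t) t d * p ^ (k - t) + Qf p V 0 (k - t) d.
    by have := @Qf_split p n D V 0 (k - t) t d; rewrite (subnK (ltnW tk)) ?add0n.
  by rewrite ffunE ek mulnDl -mulnA -expnD (subnKC (ltnW tk)) addnA.
apply: (@phi_step p n D (R + k) (R + t) U (E 0) (E (k - t)) p1 r0 Ur); first lia.
  have -> : R + k - (R + t) = k - t by lia.
  have -> : [ffun d => U d %/ p ^ (k - t)] =
     [ffun d => P d * p ^ t + Qf p V (k - t) t d].
    by apply/ffunP => d; rewrite [LHS]ffunE hsplit ffunE; case: (@dm (P d * p ^ t + Qf p V (k - t) t d) _ _ (b2 d)).
  exact: step_cat hs a1.
have -> : R + k - (R + t) = k - t by lia.
have -> : [ffun d => U d %% p ^ (k - t)] = Qf p V 0 (k - t).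
  by apply/ffunP => d; rewrite ffunE hsplit; case: (@dm (P d * p ^ t + Qf p V (k - t) t d) _ _ (b2 d)).
exact: b1.
Qed.
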